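(* If $l = 1$, then the hypergraph $\mathcal{H}$ (defined in the context) is $C_3$-free, i.e. there do not exist three distinct edges $E_1,E_2,E_3$ of $\mathcal{H}$ and three distinct vertices $v_1,v_2,v_3$ with $\{v_1,v_2\}\subseteq E_1$, $\{v_2,v_3\}\subseteq E_2$, $\{v_3,v_1\}\subseteq E_3$.
   Context: Let $r \geq 2$ and $l \geq 1$ be integers and $q$ a power of an odd prime. Let $\alpha_1, \dots, \alpha_r$ be distinct elements of $\mathbb{F}_q$, and let $m_1, \dots, m_l$ be distinct elements of $\mathbb{F}_q^* = \mathbb{F}_q\setminus\{0\}$ such that $m_s(\alpha_k - \alpha_i) \neq m_t(\alpha_k - \alpha_j)$ whenever $1 \leq s,t \leq l$ and $i,j,k$ are distinct integers in $\{1,\dots,r\}$. For $1 \leq i \leq r$ let $V_i = \mathbb{F}_q \times \mathbb{F}_q \times \{i\}$. For $x,y \in \mathbb{F}_q$, $a \in \mathbb{F}_q^*$, $s \in \{1,\dots,l\}$ let \[ e(x,y,a,m_s) = \{(x + \alpha_i m_s a,\; y + \alpha_i m_s a^2,\; i) : 1 \leq i \leq r\}. \] $\mathcal{H}$ is the $r$-uniform hypergraph with vertex set $V_1 \cup \dots \cup V_r$ and edge set $\{e(x,y,a,m_s) : x,y \in \mathbb{F}_q,\ a \in \mathbb{F}_q^*,\ 1 \leq s \leq l\}$. A hypergraph is $C_3$-free if it contains no Berge triangle (three distinct edges and three distinct vertices as described in the claim). *)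

(* Defs.v *)
From HB Require Import structures.
From mathcomp Require Import all_boot all_order all_algebra all_field.
Set Implicit Arguments. Unset Strict Implicit. Unset Printing Implicit Defensive.
Import GRing.Theory.
Local Open Scope ring_scope.

(* Vertices of H: V_1 u ... u V_r with V_i = F_q x F_q x {i}; index i ranges over 'I_r. *)
Definition vertex (F : finFieldType) (r : nat) : finType := (F * F * 'I_r)%type.

Definition edge (F : finFieldType) (r : nat) (alpha : 'I_r -> F)
  (x y a ms : F) : {set vertex F r} :=
  [set ((x + alpha i * ms * a, y + alpha i * ms * a ^+ 2), i) | i : 'I_r].

Definition is_edge (F : finFieldType) (r l : nat) (alpha : 'I_r -> F)
  (m : 'I_l -> F) (E : {set vertex F r}) : Prop :=
  exists (x y a : F) (s : 'I_l), a != 0 /\ E = edge alpha x y a (m s).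

Definition C3_free (F : finFieldType) (r l : nat) (alpha : 'I_r -> F)
  (m : 'I_l -> F) : Prop :=
  ~ exists (E1 E2 E3 : {set vertex F r}) (v1 v2 v3 : vertex F r),
      [/\ is_edge alpha m E1, is_edge alpha m E2 & is_edge alpha m E3] /\
      [/\ E1 != E2, E2 != E3 & E1 != E3] /\
      [/\ v1 != v2, v2 != v3 & v1 != v3] /\
      [/\ (v1 \in E1) && (v2 \in E1), (v2 \in E2) && (v3 \in E2)
        & (v3 \in E3) && (v1 \in E3)].

(* Main.v *)
Require Import Defs.
From HB Require Import structures.
From mathcomp Require Import all_boot all_order all_algebra all_field.
From mathcomp Require Import ring.
Import GRing.Theory.
Local Open Scope ring_scope.

Lemma mem_edge (F : finFieldType) r (alpha : 'I_r -> F) x y a mu v :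
  v \in edge alpha x y a mu ->
  v = ((x + alpha v.2 * mu * a, y + alpha v.2 * mu * a ^+ 2), v.2).
Proof. by case/imsetP => i _ ->. Qed.

Lemma key (F : fieldType) (ai aj ak c1 c2 c3 : F) :
  ai != aj -> aj != ak -> ai != ak ->
  (ai - aj) * c1 + (aj - ak) * c2 + (ak - ai) * c3 = 0 ->
  (ai - aj) * c1^+2 + (aj - ak) * c2^+2 + (ak - ai) * c3^+2 = 0 ->
  c1 = c3.
Proof.
move=> nij njk nik S1 S2.
have A0 : ai - aj != 0 by rewrite subr_eq0.
have C0 : ai - ak != 0 by rewrite subr_eq0.
have P : (ai - aj) * (c1 - c3) * (c1 - c2) = 0.
  have -> : (ai - aj) * (c1 - c3) * (c1 - c2) =
    ((ai - aj) * c1^+2 + (aj - ak) * c2^+2 + (ak - ai) * c3^+2)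
    - (c2 + c3) * ((ai - aj) * c1 + (aj - ak) * c2 + (ak - ai) * c3) by ring.
  by rewrite S1 S2 mulr0 subr0.
move/eqP: P; rewrite !mulf_eq0 (negbTE A0) /= !subr_eq0.
case/orP=> [/eqP //|/eqP e12].
move: S1; rewrite e12.
have -> : (ai - aj) * c2 + (aj - ak) * c2 + (ak - ai) * c3 = (ai - ak) * (c2 - c3) by ring.
by move/eqP; rewrite mulf_eq0 (negbTE C0) /= subr_eq0 => /eqP.
Qed.

Theorem lemma3p6 (F : finFieldType) (r l : nat)
  (alpha : 'I_r -> F) (m : 'I_l -> F) :
  (2 \notin [pchar F])%N ->
  (2 <= r)%N ->
  injective alpha ->
  injective m ->
  (forall s, m s != 0) ->
  (forall (s t : 'I_l) (i j k : 'I_r), i != j -> j != k -> i != k ->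
     m s * (alpha k - alpha i) != m t * (alpha k - alpha j)) ->
  l = 1%N ->
  C3_free alpha m.
Proof.
move=> _ _ inj_a _ mnz _ l1; subst l.
case=> [E1 [E2 [E3 [[[u1 w1] i] [[[u2 w2] j] [[[u3 w3] k]
  [[h1 h2 h3] [[n12 n23 n13] [[n1 n2 n3] [/andP[a1 b1] /andP[a2 b2] /andP[a3 b3]]]]]]]]]]].
case: h1 n12 n13 a1 b1 b3 => x1 [y1 [c1 [s1 [_ ->]]]] n12 n13 a1 b1 b3.
case: h2 n23 n12 b1 a2 b2 => x2 [y2 [c2 [s2 [_ ->]]]] n23 n12 b1 a2 b2.
case: h3 n13 n23 a3 b3 => x3 [y3 [c3 [s3 [_ ->]]]] n13 n23 a3 b3.
have es : forall s : 'I_1, s = ord0 by move=> s; apply/val_inj; case: s => [[|]].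
rewrite (es s1) (es s2) (es s3) in n12 n13 n23 a1 b1 a2 b2 a3 b3 *.
have mz := mnz ord0; set mu := m ord0 in mz n12 n13 n23 a1 b1 a2 b2 a3 b3 *.
move/mem_edge: a1 => /= [eu1 ew1].
move/mem_edge: b1 => /= [eu2 ew2].
move/mem_edge: a2 => /= [eu2' ew2'].
move/mem_edge: b2 => /= [eu3 ew3].
move/mem_edge: a3 => /= [eu3' ew3'].
move/mem_edge: b3 => /= [eu1' ew1'].
subst u1 w1 u2 w2 u3 w3.
have nij : alpha i != alpha j.
  by apply: contra n1 => /eqP /inj_a ij; rewrite ij.
have njk : alpha j != alpha k.
  by apply: contra n2 => /eqP /inj_a ij; rewrite -ij eu2' ew2'.
have nik : alpha i != alpha k.
  by apply: contra n3 => /eqP /inj_a ij; rewrite -ij in eu3' ew3' *; rewrite eu1' ew1' eu3' ew3'.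
have ex1 : x1 = x3 + alpha i * mu * c3 - alpha i * mu * c1 by rewrite -eu1'; ring.
have ey1 : y1 = y3 + alpha i * mu * c3 ^+ 2 - alpha i * mu * c1 ^+ 2 by rewrite -ew1'; ring.
have ex2 : x2 = x3 + alpha k * mu * c3 - alpha k * mu * c2 by rewrite -eu3'; ring.
have ey2 : y2 = y3 + alpha k * mu * c3 ^+ 2 - alpha k * mu * c2 ^+ 2 by rewrite -ew3'; ring.
have S1 : (alpha i - alpha j) * c1 + (alpha j - alpha k) * c2 + (alpha k - alpha i) * c3 = 0.
  apply/eqP; rewrite -(mulrI_eq0 _ (mulfI mz)); apply/eqP.
  have -> : mu * ((alpha i - alpha j) * c1 + (alpha j - alpha k) * c2 + (alpha k - alpha i) * c3)
    = (x2 + alpha j * mu * c2) - (x1 + alpha j * mu * c1) by rewrite ex1 ex2; ring.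
  by rewrite eu2' subrr.
have S2 : (alpha i - alpha j) * c1 ^+ 2 + (alpha j - alpha k) * c2 ^+ 2 + (alpha k - alpha i) * c3 ^+ 2 = 0.
  apply/eqP; rewrite -(mulrI_eq0 _ (mulfI mz)); apply/eqP.
  have -> : mu * ((alpha i - alpha j) * c1 ^+ 2 + (alpha j - alpha k) * c2 ^+ 2 + (alpha k - alpha i) * c3 ^+ 2)
    = (y2 + alpha j * mu * c2 ^+ 2) - (y1 + alpha j * mu * c1 ^+ 2) by rewrite ey1 ey2; ring.
  by rewrite ew2' subrr.
have e13 := @key _ _ _ _ _ _ _ nij njk nik S1 S2.
move/eqP: n13; apply; rewrite ex1 ey1 e13.
by congr edge; ring.
Qed.
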